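(* Let $\lambda_1,\lambda_2\in\mathbb R$ and let $\xi$ be a pseudo symmetric measure. Then for every $\tau\in\mathcal T$, the eigenvalues of $C_\xi(\tau)$, counted with multiplicity, are $0$ (multiplicity $1$), $(t-1)^{-1}q_\xi^*$ (multiplicity $1$) and $(t-1)^{-1}\ell'V_\xi\ell$ (multiplicity $t-2$), where $q_\xi^*=c_{\xi00}-(c_{\xi01},c_{\xi02})\,Q_\xi^+\,(c_{\xi10},c_{\xi20})'$. Moreover $q_\xi^*\le\ell'V_\xi\ell$.
   Context: Fix integers $k\ge 2$ and $t\ge 2$. Let $\mathcal S$ be the set of all $t^k$ sequences $s=(t_1,\dots,t_k)$ with entries $t_j\in\{1,\dots,t\}$. For $s\in\mathcal S$ let $T_s$ be the $k\times t$ matrix with $(j,i)$ entry equal to $1$ if $t_j=i$ and $0$ otherwise; let $H$ be the $k\times k$ matrix with $(i,j)$ entry $1$ if $i\equiv j+1\pmod k$ and $0$ otherwise; put $L_s=HT_s$, $R_s=H'T_s$ (a prime denotes transpose). Let $\Sigma$ be a fixed $k\times k$ positive definite matrix, $1_k$ the all-ones vector, and $\tilde B=\Sigma^{-1}-\Sigma^{-1}1_k1_k'\Sigma^{-1}/(1_k'\Sigma^{-1}1_k)$. With $G_0=T_s,G_1=L_s,G_2=R_s$ define for $0\le i,j\le 2$ the $t\times t$ matrices $C_{sij}=G_i'\tilde BG_j$. A measure is a vector $\xi=(p_s)_{s\in\mathcal S}$ with $p_s\ge0$, $\sum_sp_s=1$. Put $C_{\xi ij}=\sum_sp_sC_{sij}$,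 $c_{\xi ij}=\operatorname{tr}(C_{\xi ij})$, $V_\xi=(c_{\xi ij})_{0\le i,j\le2}$, $Q_\xi=(c_{\xi ij})_{1\le i,j\le2}$. The measure $\xi$ is pseudo symmetric if each $C_{\xi ij}$ is completely symmetric, i.e. of the form $aI_t+bJ_t$ with $J_t$ the all-ones matrix. $M^+$ denotes the Moore–Penrose inverse. For $u,w\in\mathbb R^3$ (coordinates indexed $0,1,2$) let $C_\xi[u,w]=\sum_{i,j=0}^2u_iw_jC_{\xi ij}$. Let $\mathcal T=\{x\in\mathbb R^t:1_t'x=0,\ x\ne0\}$. For $u\in\mathbb R^3$, vectors $w_1,\dots,w_m\in\mathbb R^3$ ($m\in\{1,2\}$) and $x\in\mathcal T$ define $\mathcal I_\xi(u;w_1,\dots,w_m;x)=C_\xi[u,u]-F'G^+F$, where $F$ is the $m\times t$ matrix whose $a$-th row is $(C_\xi[u,w_a]x)'$ and $G$ is the $m\times m$ matrix with entries $x'C_\xi[w_a,w_b]x$. Let $\ell=(1,\lambda_1,\lambda_2)'$, $e_1=(0,1,0)'$, $e_2=(0,0,1)'$. The information matrix of $\xi$ for the direct treatment effect is $C_\xi(\tau)=\mathcal I_\xi(\ell;e_1,e_2;\tau)$, $\tau\in\mathcal T$. *)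

(* Defs.v *)
(* The reals are generalized to an arbitrary real field R
   (the statement is purely algebraic). *)
From HB Require Import structures.
From mathcomp Require Import all_boot all_order all_algebra.
Set Implicit Arguments. Unset Strict Implicit. Unset Printing Implicit Defensive.
Import Order.TTheory GRing.Theory Num.Theory.
Local Open Scope ring_scope.

Section Defs.
Variable R : realFieldType.

Definition penrose m n (A : 'M[R]_(m, n)) (X : 'M[R]_(n, m)) : Prop :=
  [/\ A *m X *m A = A, X *m A *m X = X,
      (A *m X)^T = A *m X & (X *m A)^T = X *m A].

(* Moore--Penrose inverse M^+, via the full-rank factorisation A = Fm *m G
   (G := row_base A row-free, Fm := A *m pinvmx G column-full):
   A^+ = G' (G G')^{-1} (Fm' Fm)^{-1} Fm'.  Over a real field this matrix
   satisfies the Penrose conditions [penrose] above, hence is THE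
   Moore--Penrose inverse. *)
Definition mpinv m n (A : 'M[R]_(m, n)) : 'M[R]_(n, m) :=
  let G := row_base A in
  let Fm := A *m pinvmx G in
  G^T *m invmx (G *m G^T) *m invmx (Fm^T *m Fm) *m Fm^T.

Definition pos_def k (Sigma : 'M[R]_k) : Prop :=
  Sigma^T = Sigma /\ forall x : 'cV[R]_k, x != 0 -> 0 < (x^T *m Sigma *m x) 0 0.

(* Sequences s = (t_1..t_k) with entries in {1..t} are encoded as
   functions 'I_k -> 'I_t (entries shifted to {0..t-1}). *)
Definition seqT k t := {ffun 'I_k -> 'I_t}.

Definition Tmat k t (s : seqT k t) : 'M[R]_(k, t) :=
  \matrix_(j < k, i < t) (s j == i)%:R.

Definition Hmat k : 'M[R]_k :=
  \matrix_(i < k, j < k) (i == (j.+1 %% k)%N :> nat)%:R.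

Definition Lmat k t (s : seqT k t) : 'M[R]_(k, t) := Hmat k *m Tmat s.
Definition Rmat k t (s : seqT k t) : 'M[R]_(k, t) := (Hmat k)^T *m Tmat s.

Definition Gmat k t (s : seqT k t) (i : 'I_3) : 'M[R]_(k, t) :=
  match nat_of_ord i with 0 => Tmat s | 1 => Lmat s | _ => Rmat s end.

Definition ones n : 'cV[R]_n := const_mx 1.

Definition Btilde k (Sigma : 'M[R]_k) : 'M[R]_k :=
  invmx Sigma - (((ones k)^T *m invmx Sigma *m ones k) 0 0)^-1
                 *: (invmx Sigma *m ones k *m (ones k)^T *m invmx Sigma).

Definition Cs k t (Sigma : 'M[R]_k) (s : seqT k t) (i j : 'I_3) : 'M[R]_t :=
  (Gmat s i)^T *m Btilde Sigma *m Gmat s j.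

Definition is_measure k t (p : {ffun seqT k t -> R}) : Prop :=
  (forall s, 0 <= p s) /\ \sum_s p s = 1.

Definition Cxi k t (Sigma : 'M[R]_k) (p : {ffun seqT k t -> R}) (i j : 'I_3)
  : 'M[R]_t := \sum_s p s *: Cs Sigma s i j.

Definition cxi k t Sigma (p : {ffun seqT k t -> R}) (i j : 'I_3) : R :=
  \tr (Cxi Sigma p i j).

Definition Vxi k t Sigma (p : {ffun seqT k t -> R}) : 'M[R]_3 :=
  \matrix_(i, j) cxi Sigma p i j.

Definition Qxi k t Sigma (p : {ffun seqT k t -> R}) : 'M[R]_2 :=
  \matrix_(i < 2, j < 2) cxi Sigma p (lift ord0 i) (lift ord0 j).

Definition completely_symmetric n (M : 'M[R]_n) : Prop :=
  exists a b : R, M = a%:M + b *: const_mx 1.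

Definition pseudo_symmetric k t Sigma (p : {ffun seqT k t -> R}) : Prop :=
  forall i j, completely_symmetric (Cxi Sigma p i j).

Definition Cuw k t Sigma (p : {ffun seqT k t -> R}) (u w : 'cV[R]_3) : 'M[R]_t :=
  \sum_(i < 3) \sum_(j < 3) (u i 0 * w j 0) *: Cxi Sigma p i j.

Definition Ixi k t Sigma (p : {ffun seqT k t -> R}) m (u : 'cV[R]_3)
    (w : 'I_m -> 'cV[R]_3) (x : 'cV[R]_t) : 'M[R]_t :=
  let F : 'M[R]_(m, t) := \matrix_(a < m) (Cuw Sigma p u (w a) *m x)^T in
  let G : 'M[R]_m := \matrix_(a < m, b < m) (x^T *m Cuw Sigma p (w a) (w b) *m x) 0 0 in
  Cuw Sigma p u u - F^T *m mpinv G *m F.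

Definition in_calT t (x : 'cV[R]_t) : Prop := (ones t)^T *m x = 0 /\ x != 0.

Definition ellv (l1 l2 : R) : 'cV[R]_3 := \col_(i < 3) [:: 1; l1; l2]`_i.
Definition e1 : 'cV[R]_3 := \col_(i < 3) [:: 0; 1; 0]`_i.
Definition e2 : 'cV[R]_3 := \col_(i < 3) [:: 0; 0; 1]`_i.
Definition e12 : 'I_2 -> 'cV[R]_3 := fun a => if a == ord0 then e1 else e2.

Definition Ctau k t Sigma (p : {ffun seqT k t -> R}) (l1 l2 : R) (tau : 'cV[R]_t)
  : 'M[R]_t := Ixi Sigma p (ellv l1 l2) e12 tau.

Definition qstar k t Sigma (p : {ffun seqT k t -> R}) : R :=
  cxi Sigma p 0 0 -
  ((\row_(j < 2) cxi Sigma p 0 (lift ord0 j)) *m mpinv (Qxi Sigma p)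
     *m (\col_(i < 2) cxi Sigma p (lift ord0 i) 0)) 0 0.

Definition lVl k t Sigma (p : {ffun seqT k t -> R}) (l1 l2 : R) : R :=
  ((ellv l1 l2)^T *m Vxi Sigma p *m ellv l1 l2) 0 0.

End Defs.

(* Main.v *)
Require Import Defs.
From HB Require Import structures.
From mathcomp Require Import all_boot all_order all_algebra.
From mathcomp Require Import ring lra.
Set Implicit Arguments. Unset Strict Implicit. Unset Printing Implicit Defensive.
Import Order.TTheory GRing.Theory Num.Theory.
Local Open Scope ring_scope.


Section Gen.
Variable R : realFieldType.

Lemma unit_inj n (A : 'M[R]_n) :
  (forall u : 'rV_n, u *m A = 0 -> u = 0) -> A \in unitmx.
Proof.
move=> H; rewrite -row_free_unit -kermx_eq0; apply/eqP/row_matrixP => i.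
by rewrite row0; apply: H; rewrite -row_mul mulmx_ker row0.
Qed.

Lemma dotE n (w : 'rV[R]_n) : (w *m w^T) 0 0 = \sum_j w 0 j ^+ 2.
Proof. by rewrite mxE; apply: eq_bigr => j _; rewrite mxE expr2. Qed.

Lemma dot_ge0 n (w : 'rV[R]_n) : 0 <= (w *m w^T) 0 0.
Proof. by rewrite dotE sumr_ge0 // => j _; rewrite sqr_ge0. Qed.

Lemma dot_eq0 n (w : 'rV[R]_n) : (w *m w^T) 0 0 = 0 -> w = 0.
Proof.
rewrite dotE => /psumr_eq0P H; apply/rowP => j; rewrite mxE.
by apply/eqP; rewrite -sqrf_eq0; apply/eqP; apply: H => // i _; rewrite sqr_ge0.
Qed.

Lemma mx11_tr (a : 'M[R]_1) : a^T = a.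
Proof. by apply/matrixP => i j; rewrite mxE !ord1. Qed.


Lemma gram_unit m n (B : 'M[R]_(m, n)) :
  (forall u : 'rV_m, u *m B = 0 -> u = 0) -> B *m B^T \in unitmx.
Proof.
move=> H; apply: unit_inj => u Hu; apply: H; apply: dot_eq0.
by rewrite trmx_mul mulmxA -(mulmxA u) Hu mul0mx mxE.
Qed.

Lemma penrose_fact m n r (A : 'M[R]_(m, n)) (G : 'M_(r, n)) (Fm : 'M_(m, r)) :
  Fm *m G = A -> G *m G^T \in unitmx -> Fm^T *m Fm \in unitmx ->
  penrose A (G^T *m invmx (G *m G^T) *m invmx (Fm^T *m Fm) *m Fm^T).
Proof.
move=> FG U1 U2; subst A.
have HA : (Fm *m G) *m (G^T *m invmx (G *m G^T) *m invmx (Fm^T *m Fm) *m Fm^T)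
   = Fm *m invmx (Fm^T *m Fm) *m Fm^T.
  by rewrite !mulmxA -(mulmxA Fm G) -(mulmxA Fm (G *m G^T)) mulmxV // mulmx1.
have HB : (G^T *m invmx (G *m G^T) *m invmx (Fm^T *m Fm) *m Fm^T) *m (Fm *m G)
   = G^T *m invmx (G *m G^T) *m G.
  by rewrite !mulmxA -(mulmxA _ Fm^T Fm) -(mulmxA (G^T *m _) _ (Fm^T *m Fm)) mulVmx // mulmx1.
split.
- by rewrite HA !mulmxA -(mulmxA (Fm *m _) Fm^T Fm) -(mulmxA Fm _ (Fm^T *m Fm)) mulVmx // mulmx1.
- by rewrite HB !mulmxA -(mulmxA (G^T *m _) G G^T) -(mulmxA G^T _ (G *m G^T)) mulVmx // mulmx1.
- by rewrite HA !trmx_mul trmxK trmx_inv trmx_mul trmxK !mulmxA.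
- by rewrite HB !trmx_mul trmxK trmx_inv trmx_mul trmxK !mulmxA.
Qed.

Lemma mpinv_penrose m n (A : 'M[R]_(m, n)) : penrose A (mpinv A).
Proof.
rewrite /mpinv; set G := row_base A; set Fm := A *m pinvmx G.
have FG : Fm *m G = A by rewrite /Fm mulmxKpV // /G eq_row_base.
have U1 : G *m G^T \in unitmx.
  apply: gram_unit => u Hu; apply: (row_free_inj (row_base_free A)).
  by rewrite Hu mul0mx.
have rF : row_free Fm^T.
  rewrite /row_free mxrank_tr eqn_leq rank_leq_col /=.
  by apply: leq_trans (mxrankM_maxl Fm G); rewrite FG.
have U2 : Fm^T *m Fm \in unitmx.
  have := @gram_unit _ _ Fm^T; rewrite trmxK; apply => u Hu; apply: (row_free_inj rF).
  by rewrite Hu mul0mx.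
exact: penrose_fact FG U1 U2.
Qed.


Lemma penrose_uniq m n (A : 'M[R]_(m, n)) X Y :
  penrose A X -> penrose A Y -> X = Y.
Proof.
case=> AXA XAX AXs XAs [AYA YAY AYs YAs].
have E1 : X = X *m A *m Y.
  transitivity (X *m (A *m X)^T); first by rewrite AXs mulmxA XAX.
  transitivity (X *m X^T *m (A *m Y *m A)^T); first by rewrite AYA trmx_mul; apply: mulmxA.
  transitivity (X *m (A *m X)^T *m (A *m Y)^T); first by rewrite !trmx_mul !mulmxA.
  by rewrite AXs AYs !mulmxA XAX.
have E2 : Y = X *m A *m Y.
  transitivity ((Y *m A)^T *m Y); first by rewrite YAs YAY.
  transitivity ((A *m X *m A)^T *m Y^T *m Y); first by rewrite AXA trmx_mul.
  transitivity ((X *m A)^T *m (Y *m A)^T *m Y); first by rewrite !trmx_mul !mulmxA.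
  by rewrite XAs YAs -[LHS]mulmxA YAY.
by rewrite E1 -E2.
Qed.

Lemma penroseZ m n (A : 'M[R]_(m, n)) X c : c != 0 ->
  penrose A X -> penrose (c *: A) (c^-1 *: X).
Proof.
move=> c0 [AXA XAX AXs XAs].
have e1 : (c *: A) *m (c^-1 *: X) = A *m X.
  by rewrite -scalemxAl -scalemxAr scalerA mulfV // scale1r.
have e2 : (c^-1 *: X) *m (c *: A) = X *m A.
  by rewrite -scalemxAl -scalemxAr scalerA mulVf // scale1r.
split.
- by rewrite e1 -scalemxAr AXA.
- by rewrite e2 -scalemxAr XAX.
- by rewrite e1.
- by rewrite e2.
Qed.

Lemma mpinvZ m n (A : 'M[R]_(m, n)) c : c != 0 ->
  mpinv (c *: A) = c^-1 *: mpinv A.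
Proof.
move=> c0; apply: (penrose_uniq (mpinv_penrose _)).
exact: penroseZ (mpinv_penrose _).
Qed.

Lemma penrose_tr m n (A : 'M[R]_(m, n)) X : penrose A X -> penrose A^T X^T.
Proof.
case=> AXA XAX AXs XAs; split.
- by rewrite -[in RHS]AXA !trmx_mul mulmxA.
- by rewrite -[in RHS]XAX !trmx_mul mulmxA.
- by rewrite -trmx_mul !XAs.
- by rewrite -trmx_mul !AXs.
Qed.

Lemma mpinv_sym n (A : 'M[R]_n) : A^T = A -> (mpinv A)^T = mpinv A.
Proof.
move=> As; apply: (penrose_uniq _ (mpinv_penrose _)).
by rewrite -{1}As; apply: penrose_tr (mpinv_penrose _).
Qed.

End Gen.


Lemma sylvester (Rc : comPzRingType) n m (c : Rc) (U : 'M_(n, m)) (W : 'M_(m, n)) :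
  c ^+ m * \det (c%:M + U *m W) = c ^+ n * \det (c%:M + W *m U).
Proof.
have E : block_mx 1%:M 0 W c%:M *m block_mx (c%:M + U *m W) U 0 1%:M
       = block_mx c%:M U 0 (c%:M + W *m U) *m block_mx 1%:M 0 W 1%:M.
  rewrite !mulmx_block !mul1mx !mulmx1 !mul0mx !mulmx0 !add0r !addr0.
  by rewrite mulmxDl mulmxDr mul_mx_scalar mul_scalar_mx !mulmxA [W *m U + _]addrC.
have := congr1 determinant E.
rewrite !det_mulmx det_lblock det_ublock det_lblock det_ublock !det1 !det_scalar.
by rewrite !mul1r !mulr1.
Qed.


Lemma char_rank2 (R : realFieldType) t (a b nx : R) (x o : 'cV[R]_t) (A : 'M_t) :
  (2 <= t)%N -> o^T *m x = 0 -> o^T *m o = (t%:R)%:M -> x^T *m x = nx%:M ->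
  t%:R != 0 :> R ->
  A = a%:M - (a / t%:R) *: (o *m o^T) - b *: (x *m x^T) ->
  char_poly A = 'X * ('X - (a - b * nx)%:P) * ('X - a%:P) ^+ (t - 2).
Proof.
move=> ht Hox Hoo Hxx tn0 AE.
have Hxo : x^T *m o = 0 by rewrite -[o]trmxK -trmx_mul Hox trmx0.
set Um := row_mx o x; set Wm := col_mx ((a / t%:R) *: o^T) (b *: x^T).
have AE2 : A = a%:M - Um *m Wm.
  by rewrite AE mul_row_col -!scalemxAr opprD addrA.
have WU : Wm *m Um = block_mx a%:M 0 0 (b * nx)%:M.
  rewrite mul_col_row -!scalemxAl Hox Hxo Hoo Hxx !scaler0 !scale_scalar_mx.
  by rewrite mulfVK.
set C := 'X - a%:P.
have CM : char_poly_mx A = C%:M + (map_mx polyC Um) *m (map_mx polyC Wm).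
  have -> : (C%:M : 'M_t) = 'X%:M - (a%:P)%:M.
    rewrite /C; apply/matrixP => i j; rewrite !mxE.
    by case: (i == j); rewrite ?mulr1n ?mulr0n ?subr0.
  by rewrite /char_poly_mx AE2 map_mxB map_scalar_mx map_mxM /= opprB addrA addrAC.
have S := sylvester C (map_mx polyC Um) (map_mx polyC Wm).
rewrite -[in RHS]map_mxM WU map_block_mx !map_scalar_mx !map_mx0 /= in S.
rewrite [in RHS]scalar_mx_block add_block_mx !addr0 det_ublock in S.
have sD : forall u v : {poly R}, (u%:M + v%:M : 'M_1) = (u + v)%:M.
  by move=> u v; apply/matrixP => i j; rewrite !mxE -mulrnDl.
rewrite !sD !det_scalar !expr1 -CM in S.
have Cn0 : C ^+ 2 != 0 by rewrite expf_neq0 // polyXsubC_eq0.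
apply: (mulfI Cn0); rewrite /char_poly S.
rewrite -{1}(subnKC ht) exprD /C polyCB; ring.
Qed.


Section Main.
Variables (R : realFieldType) (k t : nat) (Sigma : 'M[R]_k) (p : {ffun seqT k t -> R}).
Hypotheses (hk : (2 <= k)%N) (ht : (2 <= t)%N) (hS : pos_def Sigma)
  (hp : is_measure p) (hps : pseudo_symmetric Sigma p).

Local Notation S := (invmx Sigma).
Local Notation o := (ones R k).
Definition qf (u v : 'cV[R]_k) := (u^T *m S *m v) 0 0.

Lemma sig_unit : Sigma \in unitmx.
Proof.
apply: unit_inj => u Hu; apply/eqP/negPn/negP => /eqP un0.
case: hS => _ /(_ u^T); rewrite trmxK.
have -> : u^T != 0 by apply/eqP => /(congr1 trmx); rewrite trmxK trmx0.
by move/(_ isT); rewrite Hu mul0mx mxE ltxx.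
Qed.

Lemma S_sym : S^T = S.
Proof. by rewrite trmx_inv; case: hS => -> _. Qed.

Lemma S_pos (y : 'cV[R]_k) : y != 0 -> 0 < qf y y.
Proof.
move=> yn0; set z := S *m y.
have yE : y = Sigma *m z by rewrite /z mulmxA mulmxV ?sig_unit // mul1mx.
have zn0 : z != 0 by apply: contraNneq yn0 => z0; rewrite yE z0 mulmx0.
have -> : qf y y = (z^T *m Sigma *m z) 0 0.
  rewrite /qf {1}yE trmx_mul; case: hS => -> _.
  by rewrite -(mulmxA z^T Sigma S) mulmxV ?sig_unit // mulmx1 -mulmxA -yE.
by case: hS => _ /(_ z zn0).
Qed.

Lemma S_ge0 (y : 'cV[R]_k) : 0 <= qf y y.
Proof.
have [->|yn0] := eqVneq y 0; first by rewrite /qf mulmx0 mxE.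
exact/ltW/S_pos.
Qed.

Lemma qf_sym u v : qf u v = qf v u.
Proof.
by rewrite /qf -[u^T *m S *m v]mx11_tr !trmx_mul trmxK S_sym mulmxA.
Qed.

Lemma qfDl u v w : qf (u + v) w = qf u w + qf v w.
Proof. by rewrite /qf raddfD /= !mulmxDl mxE. Qed.
Lemma qfZl a u w : qf (a *: u) w = a * qf u w.
Proof. by rewrite /qf linearZ /= -!scalemxAl mxE. Qed.
Lemma qfDr u v w : qf w (u + v) = qf w u + qf w v.
Proof. by rewrite /qf mulmxDr mxE. Qed.
Lemma qfZr a u w : qf w (a *: u) = a * qf w u.
Proof. by rewrite /qf -scalemxAr mxE. Qed.

Lemma o_neq0 : o != 0.
Proof.
apply/eqP => /matrixP /(_ (Ordinal (ltnW hk)) 0); rewrite !mxE => /eqP.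
by rewrite oner_eq0.
Qed.

Local Notation s := (qf o o).
Lemma s_gt0 : 0 < s. Proof. exact: S_pos o_neq0. Qed.

Lemma BtE : Btilde Sigma = S - s^-1 *: (S *m o *m o^T *m S).
Proof. by []. Qed.

Lemma Bt_o : Btilde Sigma *m o = 0.
Proof.
rewrite BtE mulmxBl -scalemxAl.
have -> : S *m o *m o^T *m S *m o = S *m o *m (s%:M).
  by rewrite -[s%:M]mx11_scalar /qf -!mulmxA.
rewrite mul_mx_scalar scalerA mulVf ?scale1r ?subrr //.
by rewrite gt_eqF // s_gt0.
Qed.

Lemma Bt_sym : (Btilde Sigma)^T = Btilde Sigma.
Proof.
rewrite BtE raddfB /= linearZ /= !trmx_mul !trmxK S_sym !mulmxA.
done.
Qed.

Lemma Bt_psd (y : 'cV[R]_k) : 0 <= (y^T *m Btilde Sigma *m y) 0 0.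
Proof.
have E : (y^T *m Btilde Sigma *m y) 0 0 = qf y y - s^-1 * (qf y o * qf o y).
  rewrite BtE mulmxBr mulmxBl -scalemxAr -scalemxAl [in LHS]mxE.
  rewrite [X in _ + X]mxE [X in _ - X]mxE.
  congr (_ - _ * _); rewrite /qf.
  have -> : y^T *m (S *m o *m o^T *m S) *m y = (y^T *m S *m o) *m (o^T *m S *m y).
    by rewrite !mulmxA.
  by rewrite mxE big_ord1.
rewrite E; set b := qf o y.
have H := S_ge0 ((- (b / s)) *: o + y).
rewrite !qfDl !qfDr !qfZl !qfZr (qf_sym y o) -/b in H.
have sn0 : s != 0 by rewrite gt_eqF // s_gt0.
rewrite (qf_sym y o) -/b.
have -> : qf y y - s^-1 * (b * b) =
   - (b / s) * (- (b / s) * s) + - (b / s) * b + (- (b / s) * b + qf y y).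
  by field.
exact: H.
Qed.

Lemma T_one (s0 : seqT k t) : Tmat R s0 *m ones R t = o.
Proof.
apply/colP => j; rewrite !mxE (bigD1 (s0 j)) //= !mxE eqxx mul1r big1 ?addr0 //.
by move=> i ne; rewrite !mxE (eq_sym (s0 j)) (negbTE ne) mul0r.
Qed.

Lemma HmatE i j : Hmat R k i j = (i == ordS j)%:R.
Proof. by rewrite mxE. Qed.

Lemma H_one : Hmat R k *m o = o.
Proof.
apply/colP => i; rewrite !mxE (bigD1 (ord_pred i)) //= HmatE ord_predK eqxx.
rewrite mxE mul1r big1 ?addr0 // => j ne; rewrite HmatE.
case: eqP => [E|]; last by rewrite mul0r.
by move: ne; rewrite E ordSK eqxx.
Qed.

Lemma Ht_one : (Hmat R k)^T *m o = o.
Proof.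
apply/colP => j; rewrite !mxE (bigD1 (ordS j)) //= mxE HmatE eqxx.
rewrite mxE mul1r big1 ?addr0 // => i ne; rewrite mxE HmatE (negbTE ne) mul0r.
done.
Qed.

Lemma G_one (s0 : seqT k t) i : Gmat R s0 i *m ones R t = o.
Proof.
case: i => [[|[|[|n]]] Hn] /=; rewrite /Gmat /=.
- exact: T_one.
- by rewrite /Lmat -mulmxA T_one H_one.
- by rewrite /Rmat -mulmxA T_one Ht_one.
- by [].
Qed.

Lemma Cs_one (s0 : seqT k t) i j : Cs Sigma s0 i j *m ones R t = 0.
Proof. by rewrite /Cs -mulmxA G_one -mulmxA Bt_o mulmx0. Qed.

Lemma Cxi_one i j : Cxi Sigma p i j *m ones R t = 0.
Proof.
rewrite /Cxi mulmx_suml big1 // => s0 _.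
by rewrite -scalemxAl Cs_one scaler0.
Qed.

Definition P : 'M[R]_t := 1%:M - (t%:R)^-1 *: const_mx 1.

Lemma tn0 : t%:R != 0 :> R.
Proof. by rewrite pnatr_eq0 -lt0n ltnW. Qed.
Lemma t1n0 : t.-1%:R != 0 :> R.
Proof. by rewrite pnatr_eq0 -lt0n -ltnS prednK // ltnW. Qed.
Lemma tE : t%:R = t.-1%:R + 1 :> R.
Proof. by rewrite natr1 prednK // ltnW. Qed.

Lemma J_one : const_mx 1 *m ones R t = t%:R *: ones R t.
Proof.
apply/colP => i; rewrite !mxE (eq_bigr (fun=> 1)) ?sumr_const ?card_ord ?mulr1 //.
by move=> j _; rewrite !mxE mulr1.
Qed.

Lemma tr_const : \tr (const_mx 1 : 'M[R]_t) = t%:R.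
Proof.
rewrite /mxtrace (eq_bigr (fun=> 1)) ?sumr_const ?card_ord //.
by move=> j _; rewrite !mxE.
Qed.

Lemma cs_form (M : 'M[R]_t) : completely_symmetric M -> M *m ones R t = 0 ->
  M = (\tr M / t.-1%:R) *: P.
Proof.
case=> a [b ->] H.
rewrite mulmxDl mul_scalar_mx -scalemxAl J_one scalerA -scalerDl in H.
have /eqP : (a + b * t%:R) = 0.
  move/matrixP: H => /(_ (Ordinal (ltnW ht)) 0); rewrite !mxE.
  by rewrite mulr1.
rewrite addr_eq0 => /eqP ab.
have bE : b = - a / t%:R by rewrite ab opprK mulfK // tn0.
rewrite mxtraceD mxtrace_scalar mxtraceZ tr_const bE /P -[a *+ t]mulr_natr.
have := tn0; have := t1n0; have := tE.
move: (t%:R) (t.-1%:R) => T T1 ET T1n Tn.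
apply/matrixP => i j; rewrite !mxE.
case: (i == j) => /=; rewrite ?mulr1n ?mulr0n.
- rewrite ET; field. by rewrite -ET Tn T1n.
- rewrite ET; field. by rewrite -ET Tn T1n.
Qed.

Local Notation c := (cxi Sigma p).
Local Notation V := (Vxi Sigma p).

Lemma Cxi_form i j : Cxi Sigma p i j = (c i j / t.-1%:R) *: P.
Proof. exact: cs_form (hps i j) (Cxi_one i j). Qed.

Lemma Cs_tr (s0 : seqT k t) i j : (Cs Sigma s0 i j)^T = Cs Sigma s0 j i.
Proof. by rewrite /Cs !trmx_mul trmxK Bt_sym mulmxA. Qed.

Lemma c_sym i j : c i j = c j i.
Proof.
rewrite /cxi -mxtrace_tr /Cxi raddf_sum /=; congr (\tr _).
by apply: eq_bigr => s0 _; rewrite linearZ /= Cs_tr.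
Qed.

Lemma V_sym : V^T = V.
Proof. by apply/matrixP => i j; rewrite !mxE c_sym. Qed.

Lemma quadE (u w : 'cV[R]_3) :
  (u^T *m V *m w) 0 0 = \sum_i \sum_j (u i 0 * w j 0) * c i j.
Proof.
rewrite mxE exchange_big /=; apply: eq_bigr => j _; rewrite mxE mulr_suml.
by apply: eq_bigr => i _; rewrite !mxE; ring.
Qed.

Lemma CuwE u w : Cuw Sigma p u w = ((u^T *m V *m w) 0 0 / t.-1%:R) *: P.
Proof.
rewrite quadE /Cuw mulr_suml scaler_suml; apply: eq_bigr => i _.
rewrite mulr_suml scaler_suml; apply: eq_bigr => j _.
by rewrite Cxi_form scalerA mulrA.
Qed.

Lemma tr_psd m n (A : 'M[R]_(m, n)) (B : 'M[R]_m) :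
  (forall y : 'cV[R]_m, 0 <= (y^T *m B *m y) 0 0) -> 0 <= \tr (A^T *m B *m A).
Proof.
move=> HB; rewrite /mxtrace sumr_ge0 // => i _.
have -> : (A^T *m B *m A) i i = ((col i A)^T *m B *m col i A) 0 0.
  rewrite !mxE; apply: eq_bigr => j _; rewrite !mxE; congr (_ * _).
  by apply: eq_bigr => l _; rewrite !mxE.
exact: HB.
Qed.

Lemma V_psd (u : 'cV[R]_3) : 0 <= (u^T *m V *m u) 0 0.
Proof.
pose Gu (s0 : seqT k t) := \sum_i u i 0 *: Gmat R s0 i.
have -> : (u^T *m V *m u) 0 0 =
    \sum_s0 p s0 * \tr ((Gu s0)^T *m Btilde Sigma *m Gu s0).
  rewrite quadE.
  transitivity (\sum_i \sum_j \sum_s0 p s0 * (u i 0 * u j 0 * \tr (Cs Sigma s0 i j))).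
    apply: eq_bigr => i _; apply: eq_bigr => j _.
    rewrite /cxi /Cxi raddf_sum mulr_sumr; apply: eq_bigr => s0 _.
    by rewrite /= mxtraceZ; ring.
  have E2 : forall s0, p s0 * \tr ((Gu s0)^T *m Btilde Sigma *m Gu s0) =
     \sum_i \sum_j p s0 * (u i 0 * u j 0 * \tr (Cs Sigma s0 i j)).
    move=> s0.
    have M : (Gu s0)^T *m Btilde Sigma *m Gu s0 =
       \sum_i \sum_j (u i 0 * u j 0) *: Cs Sigma s0 i j.
      rewrite /Gu [(\sum_(i < 3) _)^T]raddf_sum /= !mulmx_suml.
      apply: eq_bigr => i _; rewrite mulmx_sumr; apply: eq_bigr => j _.
      by rewrite linearZ /= [(_ *: _)^T]linearZ /= -!scalemxAl scalerA mulrC.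
    rewrite M raddf_sum mulr_sumr; apply: eq_bigr => i _.
    rewrite raddf_sum mulr_sumr; apply: eq_bigr => j _.
    by rewrite /= mxtraceZ.
  under [RHS]eq_bigr => s0 _ do rewrite E2.
  rewrite [RHS]exchange_big; apply: eq_bigr => i _.
  by rewrite [RHS]exchange_big.
apply: sumr_ge0 => s0 _; apply: mulr_ge0; first by case: hp.
by apply: tr_psd => y; exact: Bt_psd.
Qed.

Definition cn (i j : nat) : R := c (inord i) (inord j).
Lemma cE (i j : 'I_3) : c i j = cn i j.
Proof. by rewrite /cn !inord_val. Qed.
Lemma cnS (i j : nat) : (i < 3)%N -> (j < 3)%N -> cn i j = cn j i.
Proof. by move=> *; rewrite /cn c_sym. Qed.

Definition vn n (b : 'cV[R]_n.+1) (i : nat) : R := b (inord i) 0.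
Lemma vE n (b : 'cV[R]_n.+1) (i : 'I_n.+1) : b i 0 = vn b i.
Proof. by rewrite /vn inord_val. Qed.

Definition emb (a : R) (b : 'cV[R]_2) : 'cV[R]_3 := \col_(i < 3) [:: a; b 0 0; b 1 0]`_i.
Local Notation Q := (Qxi Sigma p).
Definition cv : 'cV[R]_2 := \col_(i < 2) c (lift ord0 i) 0.

Lemma quad_emb a b : ((emb a b)^T *m V *m emb a b) 0 0 =
  a ^+ 2 * c 0 0 + 2 * a * (b^T *m cv) 0 0 + (b^T *m Q *m b) 0 0.
Proof.
rewrite quadE !mxE !big_ord_recr big_ord0 /= !mxE /=.
rewrite !big_ord_recr !big_ord0 /= !mxE /= !cE !vE /=.
rewrite /bump /= (_ : (1 %% 2)%N = 1%N) // (@cnS 1 0) // (@cnS 2 0) // (@cnS 2 1) //.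
ring.
Qed.

Lemma Q_sym : Q^T = Q.
Proof. by apply/matrixP => i j; rewrite !mxE c_sym. Qed.

Lemma rowc : (\row_(j < 2) c 0 (lift ord0 j)) = cv^T.
Proof. by apply/rowP => j; rewrite !mxE c_sym. Qed.

Lemma Q_psd (b : 'cV[R]_2) : 0 <= (b^T *m Q *m b) 0 0.
Proof.
have := V_psd (emb 0 b); rewrite quad_emb.
by rewrite expr0n /= mul0r mulr0 mul0r !add0r.
Qed.

Lemma c00_ge0 : 0 <= c 0 0.
Proof.
have := V_psd (emb 1 0); rewrite quad_emb.
by rewrite trmx0 !mul0mx !mxE expr1n mul1r mulr0 !addr0.
Qed.

Definition lam (l1 l2 : R) : 'cV[R]_2 := \col_(i < 2) [:: l1; l2]`_i.

Lemma ellvE l1 l2 : ellv l1 l2 = emb 1 (lam l1 l2).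
Proof. by apply/colP => i; rewrite !mxE; case: i => [[|[|[|]]] ?]. Qed.

Lemma geE l1 l2 (a : 'I_2) :
  ((ellv l1 l2)^T *m V *m e12 R a) 0 0 = (cv + Q *m lam l1 l2) a 0.
Proof.
rewrite quadE !big_ord_recr big_ord0 /= !mxE /=.
rewrite !big_ord_recr !big_ord0 /= !mxE /= !cE /=.
case: a => [[|[|]] Ha] //=; rewrite /e12 /= /e1 /e2 !mxE /= /bump /=.
- by rewrite (@cnS 1 0) // (@cnS 2 0) // (@cnS 2 1) //; ring.
- by rewrite (@cnS 1 0) // (@cnS 2 0) // (@cnS 2 1) //; ring.
Qed.

Lemma eQ (a b : 'I_2) : ((e12 R a)^T *m V *m e12 R b) 0 0 = Q a b.
Proof.
rewrite quadE !big_ord_recr !big_ord0 /= !mxE /= ?cE /=.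
case: a => [[|[|]] Ha] //=; case: b => [[|[|]] Hb] //=;
  rewrite /e12 /= /e1 /e2 !mxE /= ?cE /bump /=; ring.
Qed.

Local Notation M := (mpinv Q).

Lemma M_sym : M^T = M.
Proof. exact: mpinv_sym Q_sym. Qed.

Lemma QQM : Q *m (Q *m M) = Q.
Proof.
case: (mpinv_penrose Q) => QMQ _ QMs _.
by rewrite -[LHS]trmxK trmx_mul QMs Q_sym QMQ Q_sym.
Qed.

Lemma range : Q *m M *m cv = cv.
Proof.
case: (mpinv_penrose Q) => QMQ _ QMs _.
set d := cv - Q *m M *m cv.
have Qd : Q *m d = 0 by rewrite /d mulmxBr (mulmxA Q (Q *m M)) QQM subrr.
have dQ : d^T *m Q = 0 by rewrite -Q_sym -trmx_mul Qd trmx0.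
have dd : d^T *m d = d^T *m cv.
  by rewrite {2}/d mulmxBr -!mulmxA (mulmxA d^T Q) dQ mul0mx subr0.
set n := (d^T *m d) 0 0.
have n0 : 0 <= n by have := dot_ge0 d^T; rewrite trmxK.
suff n00 : n = 0.
  have dz : d^T = 0 by apply: dot_eq0; rewrite trmxK.
  have : d = 0 by rewrite -[d]trmxK dz trmx0.
  by move/eqP; rewrite /d subr_eq0 => /eqP <-.
apply/eqP; apply: contraT => nn0.
have np : 0 < n by rewrite lt_def nn0 n0.
set a := n / (c 0 0 + 1).
have c0 := c00_ge0.
have H := V_psd (emb a (- d)).
rewrite quad_emb raddfN /= !mulNmx dQ mul0mx oppr0 in H. move: H. rewrite [(0 : 'M_1) 0 0]mxE addr0. move=> H; rewrite -dd in H.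
have c1 : c 0 0 + 1 != 0 by rewrite gt_eqF // ltr_wpDl.
have E : a ^+ 2 * c 0 0 + 2 * a * (- (d^T *m d)) 0 0 =
    - (n ^+ 2 * (c 0 0 + 2) / (c 0 0 + 1) ^+ 2).
  rewrite mxE -/n /a; field; exact: c1.
rewrite E oppr_ge0 in H.
have : 0 < n ^+ 2 * (c 0 0 + 2) / (c 0 0 + 1) ^+ 2.
  rewrite divr_gt0 // ?exprn_gt0 ?ltr_wpDl // mulr_gt0 ?exprn_gt0 //.
  by rewrite ltr_wpDl.
by rewrite ltNge H.
Qed.

Lemma lVlE l1 l2 : lVl Sigma p l1 l2 =
  c 0 0 + 2 * ((lam l1 l2)^T *m cv) 0 0 + ((lam l1 l2)^T *m Q *m lam l1 l2) 0 0.
Proof. by rewrite /lVl ellvE quad_emb expr1n mul1r mulr1. Qed.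

Lemma qstarE : qstar Sigma p = c 0 0 - (cv^T *m M *m cv) 0 0.
Proof. by rewrite /qstar rowc. Qed.

Lemma gMg_gen l1 l2 (M' : 'M[R]_2) : M'^T = M' -> Q *m M' *m Q = Q ->
  Q *m M' *m cv = cv ->
  ((cv + Q *m lam l1 l2)^T *m M' *m (cv + Q *m lam l1 l2)) 0 0
   = lVl Sigma p l1 l2 - (c 0 0 - (cv^T *m M' *m cv) 0 0).
Proof.
move=> Ms QMQ rg.
set lm := lam l1 l2.
have e1 : lm^T *m Q *m M' *m cv = lm^T *m cv.
  by rewrite -(mulmxA (lm^T *m Q)) -(mulmxA lm^T) (mulmxA Q) rg.
have e2 : cv^T *m M' *m Q *m lm = lm^T *m cv.
  by rewrite -e1 -[LHS]mx11_tr !trmx_mul trmxK Ms Q_sym !mulmxA.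
have e3 : lm^T *m Q *m M' *m Q *m lm = lm^T *m Q *m lm.
  by rewrite -(mulmxA (lm^T *m Q) M' Q) -(mulmxA lm^T Q (M' *m Q)) (mulmxA Q M' Q) QMQ.
rewrite [(cv + _)^T]raddfD /= trmx_mul Q_sym mulmxDl mulmxDl mulmxDr mulmxDr.
rewrite !mulmxA e1 e2 e3 lVlE.
rewrite !mxE; ring.
Qed.

Lemma gMgE l1 l2 :
  ((cv + Q *m lam l1 l2)^T *m M *m (cv + Q *m lam l1 l2)) 0 0
   = lVl Sigma p l1 l2 - qstar Sigma p.
Proof.
case: (mpinv_penrose Q) => QMQ _ _ _.
by rewrite qstarE; apply: gMg_gen; [exact: M_sym | exact: QMQ | exact: range].
Qed.

Lemma M_psd_gen (M' : 'M[R]_2) (g : 'cV[R]_2) : M'^T = M' -> M' *m Q *m M' = M' ->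
  0 <= (g^T *m M' *m g) 0 0.
Proof.
move=> Ms MQM.
have -> : g^T *m M' *m g = (M' *m g)^T *m Q *m (M' *m g).
  by rewrite trmx_mul Ms !mulmxA -(mulmxA (g^T *m M') Q M') -(mulmxA g^T M' (Q *m M')) (mulmxA M' Q M') MQM.
exact: Q_psd.
Qed.

Lemma qstar_le l1 l2 : qstar Sigma p <= lVl Sigma p l1 l2.
Proof.
case: (mpinv_penrose Q) => _ MQM _ _.
rewrite -subr_ge0 -gMgE; apply: M_psd_gen => //; exact: M_sym.
Qed.

Lemma J_outer : const_mx 1 = ones R t *m (ones R t)^T.
Proof. by apply/matrixP => i j; rewrite !mxE big_ord1 !mxE mulr1. Qed.

Lemma P_x (x : 'cV[R]_t) : (ones R t)^T *m x = 0 -> P *m x = x.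
Proof.
move=> Hx; rewrite /P mulmxBl mul1mx -scalemxAl J_outer -mulmxA Hx mulmx0.
by rewrite scaler0 subr0.
Qed.

Lemma Ctau_form l1 l2 (x : 'cV[R]_t) : in_calT x ->
  Ctau Sigma p l1 l2 x =
   (t.-1%:R^-1 * lVl Sigma p l1 l2) *: P
   - ((lVl Sigma p l1 l2 - qstar Sigma p) / (t.-1%:R * (x^T *m x) 0 0)) *: (x *m x^T).
Proof.
case=> Hx xn0.
set nx := (x^T *m x) 0 0.
have nxn0 : nx != 0.
  apply: contraNneq xn0 => H; have : x^T = 0 by apply: dot_eq0; rewrite trmxK.
  by move/(congr1 trmx); rewrite trmxK trmx0 => ->.
set gv := cv + Q *m lam l1 l2.
set g' := t.-1%:R^-1 *: gv.
rewrite /Ctau /Ixi /=.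
have FE : \matrix_(a < 2) (Cuw Sigma p (ellv l1 l2) (e12 R a) *m x)^T = g' *m x^T.
  apply/matrixP => a j; rewrite [LHS]mxE CuwE -scalemxAl P_x // geE -/gv !mxE big_ord1 !mxE.
  by rewrite [_ / _]mulrC.
have GE : \matrix_(a < 2, b < 2) (x^T *m Cuw Sigma p (e12 R a) (e12 R b) *m x) 0 0
     = (nx / t.-1%:R) *: Q.
  apply/matrixP => a b; rewrite [LHS]mxE CuwE -scalemxAr -scalemxAl -(mulmxA x^T P x) P_x // eQ.
  rewrite [LHS]mxE [RHS]mxE -/nx; ring.

rewrite FE GE mpinvZ; last by rewrite mulf_neq0 // invr_eq0 t1n0.
rewrite CuwE (_ : ((ellv l1 l2)^T *m V *m ellv l1 l2) 0 0 = lVl Sigma p l1 l2) //.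
set sc := (nx / t.-1%:R)^-1.
have E : (g' *m x^T)^T *m (sc *: M) *m (g' *m x^T)
   = (sc * (t.-1%:R^-1 * t.-1%:R^-1 * (gv^T *m M *m gv) 0 0)) *: (x *m x^T).
  have -> : (g' *m x^T)^T *m (sc *: M) *m (g' *m x^T)
     = x *m (g'^T *m (sc *: M) *m g') *m x^T.
    by rewrite trmx_mul trmxK !mulmxA.
  rewrite [g'^T *m _ *m g']mx11_scalar mul_mx_scalar -scalemxAl.
  congr (_ *: _); rewrite /g' linearZ /= [(_ *: gv)^T]linearZ /= -!scalemxAl -!scalemxAr -!scalemxAl !mxE.
  ring.
rewrite E gMgE; congr (_ - _ *: _).
- by rewrite mulrC.
- rewrite /sc; field; apply/andP; split => //; exact: t1n0.
Qed.

Lemma main_char l1 l2 (x : 'cV[R]_t) : in_calT x ->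
  char_poly (Ctau Sigma p l1 l2 x) =
       'X * ('X - ((t.-1)%:R^-1 * qstar Sigma p)%:P)
          * ('X - ((t.-1)%:R^-1 * lVl Sigma p l1 l2)%:P) ^+ (t - 2).
Proof.
move=> Hin; have := Hin; case=> Hx xn0.
set nx := (x^T *m x) 0 0.
have nxn0 : nx != 0.
  apply: contraNneq xn0 => H; have : x^T = 0 by apply: dot_eq0; rewrite trmxK.
  by move/(congr1 trmx); rewrite trmxK trmx0 => ->.
set a := t.-1%:R^-1 * lVl Sigma p l1 l2.
set b := (lVl Sigma p l1 l2 - qstar Sigma p) / (t.-1%:R * nx).
have -> : t.-1%:R^-1 * qstar Sigma p = a - b * nx.
  rewrite /a /b; field; apply/andP; split => //; exact: t1n0.
apply: (char_rank2 (o := ones R t) (x := x)) => //.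
- apply/matrixP => i j; rewrite !ord1 !mxE eqxx mulr1n (eq_bigr (fun=> 1)) ?sumr_const ?card_ord //.
  by move=> l _; rewrite !mxE mulr1.
- exact: mx11_scalar.
- exact: tn0.
- rewrite Ctau_form // -/a -/nx -/b /P scalerBr -J_outer scale_scalar_mx mulr1.
  by rewrite scalerA.
Qed.

End Main.

Theorem proposition2 (R : realFieldType) (k t : nat) (hk : (2 <= k)%N) (ht : (2 <= t)%N)
  (Sigma : 'M[R]_k) (hS : pos_def Sigma)
  (p : {ffun seqT k t -> R}) (hp : is_measure p) (hps : pseudo_symmetric Sigma p)
  (l1 l2 : R) :
  (forall tau : 'cV[R]_t, in_calT tau ->
     char_poly (Ctau Sigma p l1 l2 tau) =
       'X * ('X - ((t.-1)%:R^-1 * qstar Sigma p)%:P)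
          * ('X - ((t.-1)%:R^-1 * lVl Sigma p l1 l2)%:P) ^+ (t - 2))
  /\ qstar Sigma p <= lVl Sigma p l1 l2.
Proof.
split.
- by move=> tau Htau; apply: main_char.
- exact: qstar_le.
Qed.
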